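(* Let $G = N \rtimes H$ with $N,H$ finite abelian, let $\mathcal{O}_\alpha$ be an $H$-orbit in $P_N$ with stabilizer $H_\alpha$ and $c_\alpha = |\mathcal{O}_\alpha| = [H:H_\alpha]$, and let $u_p$ be an element of the idempotent eigenbasis of $\mathbb{C}[H_\alpha]$. Fix $v_1 \in \mathcal{O}_\alpha$, choose representatives $h_1,\dots,h_{c_\alpha}$ of the cosets of $H_\alpha$ in $H$, put $v_i = h_iv_1h_i^{-1}$ (so $\mathcal{O}_\alpha = \{v_1,\dots,v_{c_\alpha}\}$), $w_i = v_iu_p$, and $e_{ij} = w_i h_ih_j^{-1} w_j$. Then $e_{ij}e_{jk} = e_{ik}$, $e_{ij}e_{kl}=0$ for $j\ne k$, and $e_{ij}\mapsto E_{ij}$ defines an algebra isomorphism of the block $A = \mathbb{C}[G]J^{[\alpha]}_p$, where $J^{[\alpha]}_p = \sum_{i=1}^{c_\alpha} w_i$, with $\mathbb{M}_{c_\alpha}(\mathbb{C})$.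
   Context: $N$ is normal in $G$, $H$ acts on $N$ by conjugation. For a finite abelian group $K$, the idempotent eigenbasis of $\mathbb{C}[K]$ is the unique basis of $\mathbb{C}[K]$ consisting of simultaneous eigenvectors of left multiplication by elements of $\mathbb{C}[K]$ and consisting of pairwise orthogonal idempotents. $P_N$ is the idempotent eigenbasis of $\mathbb{C}[N]$, permuted by conjugation by $H$; $H_\alpha$ is the common stabilizer of the elements of $\mathcal{O}_\alpha$. $E_{ij}$ is the elementary $c_\alpha\times c_\alpha$ matrix with $1$ in position $(i,j)$. *)

(* Defs.v *)
From HB Require Import structures.
From mathcomp Require Import all_boot all_order all_algebra all_fingroup all_solvable all_field.
Set Implicit Arguments. Unset Strict Implicit. Unset Printing Implicit Defensive.
Import GRing.Theory Num.Theory.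
Local Open Scope ring_scope.

(* The complex group algebra of the ambient finite group gT, realised as
   functions gT -> algC; C[K] for K : {set gT} is the subspace of functions
   supported in K. *)
Definition galg (gT : finGroupType) := {ffun gT -> algC^o}.

Definition gdelta (gT : finGroupType) (g : gT) : galg gT :=
  [ffun x => (x == g)%:R].

Definition gmul (gT : finGroupType) (a b : galg gT) : galg gT :=
  [ffun g => \sum_(x : gT) a x * b (x^-1 * g)%g].

Definition in_galg (gT : finGroupType) (K : {set gT}) (a : galg gT) : Prop :=
  forall g, g \notin K -> a g = 0.

Definition gconj (gT : finGroupType) (h : gT) (a : galg gT) : galg gT :=
  gmul (gmul (gdelta h) a) (gdelta h^-1%g).

Definition idem_eigenbasis (gT : finGroupType) (K : {set gT}) (B : seq (galg gT)) : Prop :=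
  [/\ uniq B,
      forall b, b \in B -> in_galg K b,
      (
      forall c : 'I_(size B) -> algC,
        \sum_(i < size B) c i *: B`_i = 0 -> forall i, c i = 0) /\
      (forall a, in_galg K a -> exists c : 'I_(size B) -> algC,
        a = \sum_(i < size B) c i *: B`_i),
      forall b x, b \in B -> in_galg K x -> exists l : algC, gmul x b = l *: b
    & (forall b, b \in B -> gmul b b = b)
    /\ (forall b b', b \in B -> b' \in B -> b != b' -> gmul b b' = 0)].

(* Main.v *)
Require Import Defs.
From HB Require Import structures.
From mathcomp Require Import all_boot all_order all_algebra all_fingroup all_solvable all_field.
Import GRing.Theory Num.Theory.
Set Implicit Arguments. Unset Strict Implicit.
Local Open Scope ring_scope.

Section GAlg.
Variable gT : finGroupType.
Implicit Types (a b c : galg gT) (x y g h : gT).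

Lemma scaleCE (k x : algC) : (k *: (x : algC^o)) = k * x.
Proof. by []. Qed.

Lemma gmulE a b g : gmul a b g = \sum_x a x * b (x^-1 * g)%g.
Proof. by rewrite ffunE. Qed.

Lemma gdeltaE x g : gdelta x g = (g == x)%:R.
Proof. by rewrite ffunE. Qed.

Lemma gmul_deltal x a : gmul (gdelta x) a = [ffun g => a (x^-1 * g)%g].
Proof.
apply/ffunP=> g; rewrite !ffunE (bigD1 x) //= big1 => [|y /negbTE yx].
  by rewrite gdeltaE eqxx mul1r addr0.
by rewrite gdeltaE yx mul0r.
Qed.

Lemma gmul_deltar a x : gmul a (gdelta x) = [ffun g => a (g * x^-1)%g].
Proof.
apply/ffunP=> g; rewrite !ffunE (bigD1 (g * x^-1)%g) //= big1 => [|y yx].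
  by rewrite gdeltaE invMg invgK mulgKV eqxx mulr1 addr0.
rewrite gdeltaE; case: eqP => [E|]; last by rewrite mulr0.
by move: yx; rewrite -E invMg invgK mulKVg eqxx.
Qed.

Lemma gdeltaM x y : gmul (gdelta x) (gdelta y) = gdelta (x * y)%g.
Proof.
rewrite gmul_deltal; apply/ffunP=> g; rewrite !ffunE; congr (_%:R).
by rewrite -(inj_eq (mulgI x)) mulKVg.
Qed.

Lemma gmul1l a : gmul (gdelta 1%g) a = a.
Proof. by rewrite gmul_deltal; apply/ffunP=> g; rewrite ffunE invg1 mul1g. Qed.

Lemma gmul1r a : gmul a (gdelta 1%g) = a.
Proof. by rewrite gmul_deltar; apply/ffunP=> g; rewrite ffunE invg1 mulg1. Qed.

Lemma gmulA a b c : gmul (gmul a b) c = gmul a (gmul b c).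
Proof.
apply/ffunP=> g; rewrite !ffunE.
under eq_bigr => y _ do rewrite ffunE mulr_suml.
rewrite exchange_big /=; apply: eq_bigr => x _.
rewrite ffunE mulr_sumr (reindex_inj (mulgI x)) /=.
apply: eq_bigr => z _.
by rewrite mulKg invMg mulgA mulrA.
Qed.

Lemma gmulDl a b c : gmul (a + b) c = gmul a c + gmul b c.
Proof.
apply/ffunP=> g; rewrite !ffunE -big_split; apply: eq_bigr => x _.
by rewrite ffunE mulrDl.
Qed.

Lemma gmulDr a b c : gmul a (b + c) = gmul a b + gmul a c.
Proof.
apply/ffunP=> g; rewrite !ffunE -big_split; apply: eq_bigr => x _.
by rewrite ffunE mulrDr.
Qed.

Lemma gmulZl k a b : gmul (k *: a) b = k *: gmul a b.
Proof.
apply/ffunP=> g; rewrite !ffunE scaler_sumr; apply: eq_bigr => x _.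
by rewrite ffunE scalerAl.
Qed.

Lemma gmulZr k a b : gmul a (k *: b) = k *: gmul a b.
Proof.
apply/ffunP=> g; rewrite !ffunE scaler_sumr; apply: eq_bigr => x _.
by rewrite ffunE scalerAr.
Qed.

Lemma gmul0l a : gmul 0 a = 0.
Proof. by apply/ffunP=> g; rewrite !ffunE big1 // => x _; rewrite ffunE mul0r. Qed.

Lemma gmul0r a : gmul a 0 = 0.
Proof. by apply/ffunP=> g; rewrite !ffunE big1 // => x _; rewrite ffunE mulr0. Qed.

Lemma gmul_suml I r (P : pred I) F b :
  gmul (\sum_(i <- r | P i) F i) b = \sum_(i <- r | P i) gmul (F i) b.
Proof.
apply: (big_morph (fun a => gmul a b)); [by move=> ??; exact: gmulDl | exact: gmul0l].
Qed.

Lemma gmul_sumr I r (P : pred I) F b :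
  gmul b (\sum_(i <- r | P i) F i) = \sum_(i <- r | P i) gmul b (F i).
Proof.
apply: (big_morph (fun a => gmul b a)); [by move=> ??; exact: gmulDr | exact: gmul0r].
Qed.

Lemma sum_galgE I r (P : pred I) (F : I -> galg gT) g :
  (\sum_(i <- r | P i) F i) g = \sum_(i <- r | P i) F i g.
Proof.
apply: (big_morph (fun a : galg gT => a g)); [by move=> ??; rewrite ffunE | by rewrite ffunE].
Qed.

Lemma in_galg_mul (K : {group gT}) a b :
  in_galg K a -> in_galg K b -> in_galg K (gmul a b).
Proof.
move=> Ha Hb g gK; rewrite ffunE big1 // => x _.
case xK: (x \in K); last by rewrite Ha ?xK ?mul0r.
by rewrite Hb ?mulr0 // groupMl ?groupV.
Qed.

Lemma in_galg_delta (K : {set gT}) x : x \in K -> in_galg K (gdelta x).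
Proof. by move=> xK g gK; rewrite ffunE; case: eqP => // E; rewrite E xK in gK. Qed.

Lemma in_galgD (K : {set gT}) a b : in_galg K a -> in_galg K b -> in_galg K (a + b).
Proof. by move=> Ha Hb g gK; rewrite ffunE Ha ?Hb ?addr0. Qed.

Lemma in_galgZ (K : {set gT}) k a : in_galg K a -> in_galg K (k *: a).
Proof. by move=> Ha g gK; rewrite ffunE Ha ?scaler0. Qed.

Lemma in_galg0 (K : {set gT}) : in_galg K 0.
Proof. by move=> g _; rewrite ffunE. Qed.

Lemma in_galg_sum (K : {set gT}) I r (P : pred I) F :
  (forall i, P i -> in_galg K (F i)) -> in_galg K (\sum_(i <- r | P i) F i).
Proof.
move=> HF; apply: (big_ind (in_galg K)); [exact: in_galg0 | exact: in_galgD | exact: HF].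
Qed.

Lemma in_galgS (K K' : {set gT}) a : K \subset K' -> in_galg K a -> in_galg K' a.
Proof.
move=> sKK' Ha g gK; apply: Ha; apply: contra gK; exact: (subsetP sKK').
Qed.

Lemma galg_expand (K : {set gT}) a : in_galg K a -> a = \sum_(g in K) a g *: gdelta g.
Proof.
move=> Ha; apply/ffunP=> x; rewrite sum_galgE.
case xK: (x \in K).
  rewrite (bigD1 x) //= big1 => [|y /andP[_ yx]]; first by rewrite ffunE gdeltaE eqxx scaleCE mulr1 addr0.
  by rewrite ffunE gdeltaE eq_sym (negbTE yx) scaleCE mulr0.
rewrite Ha ?xK // big1 // => y yK; rewrite ffunE gdeltaE.
by case: eqP => [E|]; [rewrite E yK in xK | rewrite scaleCE mulr0].
Qed.

Lemma comm_expand (K : {set gT}) a b : in_galg K a ->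
  (forall g, g \in K -> gmul (gdelta g) b = gmul b (gdelta g)) -> gmul a b = gmul b a.
Proof.
move=> Ka E; rewrite {1}(@galg_expand K a Ka) {2}(@galg_expand K a Ka) gmul_suml gmul_sumr.
by apply: eq_bigr => g gK; rewrite gmulZl gmulZr E.
Qed.

Lemma gconjE h a : gconj h a = [ffun g => a (h^-1 * g * h)%g].
Proof.
rewrite /gconj gmul_deltar gmul_deltal; apply/ffunP => g; rewrite !ffunE invgK.
by rewrite mulgA.
Qed.

End GAlg.

Section Gen.
Variable gT : finGroupType.
Implicit Types (a b : galg gT) (x y g h : gT).

Lemma ab_comm (K : {group gT}) (abK : abelian K) x y :
  x \in K -> y \in K -> (x * y = y * x)%g.
Proof. by move=> xK yK; apply: (centsP abK). Qed.

Lemma gconj1 a : gconj 1%g a = a.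
Proof. by rewrite gconjE; apply/ffunP=> g; rewrite ffunE invg1 mul1g mulg1. Qed.

Lemma gconjM x y a : gconj (x * y)%g a = gconj x (gconj y a).
Proof. by rewrite !gconjE; apply/ffunP=> g; rewrite !ffunE invMg !mulgA. Qed.

Lemma gconjZ h k a : gconj h (k *: a) = k *: gconj h a.
Proof. by rewrite /gconj gmulZr gmulZl. Qed.

Lemma gconj0 h : gconj h 0 = 0.
Proof. by rewrite /gconj gmul0r gmul0l. Qed.

Lemma gdeltaVK h a : gmul (gdelta h^-1%g) (gmul (gdelta h) a) = a.
Proof. by rewrite -gmulA gdeltaM mulVg gmul1l. Qed.

Lemma gdeltaKV h a : gmul (gdelta h) (gmul (gdelta h^-1%g) a) = a.
Proof. by rewrite -gmulA gdeltaM mulgV gmul1l. Qed.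

Lemma gconj_mul h a b : gconj h (gmul a b) = gmul (gconj h a) (gconj h b).
Proof. by rewrite /gconj !gmulA gdeltaVK. Qed.

Lemma gconjK h a : gconj h^-1%g (gconj h a) = a.
Proof. by rewrite -gconjM mulVg gconj1. Qed.

Lemma gconjVK h a : gconj h (gconj h^-1%g a) = a.
Proof. by rewrite -gconjM mulgV gconj1. Qed.

Lemma gdelta_conj h a : gmul (gdelta h) a = gmul (gconj h a) (gdelta h).
Proof. by rewrite /gconj gmulA gdeltaM mulVg gmul1r. Qed.

Lemma gconj_in (K : {set gT}) h a : h \in 'N(K)%g -> in_galg K a -> in_galg K (gconj h a).
Proof.
move=> nK Ka g gK; rewrite gconjE ffunE Ka //.
by rewrite -mulgA -/(conjg g h) memJ_norm.
Qed.

Lemma galg_neq0 a : a != 0 -> exists g, a g != 0.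
Proof.
move=> nz; apply/existsP; apply: contraR nz => /existsPn H0.
by apply/eqP/ffunP=> g; rewrite ffunE; apply/eqP; rewrite -[_ == _]negbK H0.
Qed.

Lemma eigenbasis_neq0 (K : {set gT}) B b : idem_eigenbasis K B -> b \in B -> b != 0.
Proof.
case=> _ _ [indep _] _ _ bB; apply/negP => /eqP b0.
have ib : (index b B < size B)%N by rewrite index_mem.
suff : ((Ordinal ib == Ordinal ib)%:R : algC) = 0 by rewrite eqxx => /eqP; rewrite oner_eq0.
apply: (indep (fun i => (i == Ordinal ib)%:R)).
rewrite (bigD1 (Ordinal ib)) //= big1 => [|i /negbTE ->]; last by rewrite scale0r.
by rewrite eqxx scale1r nth_index // b0 addr0.
Qed.

Lemma comm_abelian (K : {group gT}) (abK : abelian K) a b :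
  in_galg K a -> in_galg K b -> gmul a b = gmul b a.
Proof.
move=> Ka Kb; apply: (comm_expand Ka) => g gK.
symmetry; apply: (comm_expand Kb) => h hK.
by rewrite !gdeltaM (ab_comm abK hK gK).
Qed.

Definition eig_idem (K : {set gT}) a :=
  [/\ in_galg K a, gmul a a = a, a != 0 &
      forall z : galg gT, in_galg K z -> exists l : algC, gmul z a = l *: a].

Lemma eigenbasis_eig (K : {set gT}) B b : idem_eigenbasis K B -> b \in B -> eig_idem K b.
Proof.
move=> hB bB; have nz := eigenbasis_neq0 hB bB.
case: hB => _ supp _ eig [idem _]; split; auto.

Qed.

Lemma scale_idem (l : algC) a : a != 0 -> l *: a = (l * l) *: a -> l = 0 \/ l = 1.
Proof.
move=> nz E.
have : (l * l - l) *: a = 0 by rewrite scalerBl -E subrr.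
move/eqP; rewrite scaler_eq0 (negbTE nz) orbF subr_eq0.
have [->|l0] := eqVneq l 0; first by left.
rewrite -{3}(mulr1 l) (inj_eq (mulfI l0)) => /eqP ->; by right.
Qed.

Lemma eig_orth (K : {group gT}) (abK : abelian K) a b :
  eig_idem K a -> eig_idem K b -> a != b -> gmul a b = 0.
Proof.
move=> [Ka aa a0 ea] [Kb bb b0 eb] ab.
have [l El] := eb a Ka; have [m Em] := ea b Kb.
have Eab := comm_abelian abK Ka Kb.
have sq : gmul (gmul a b) (gmul a b) = gmul a b.
  by rewrite gmulA -(gmulA b) -Eab !gmulA -gmulA aa bb.
have : l *: b = (l * l) *: b by rewrite -El -{1}sq El gmulZl gmulZr bb scalerA.
case/(scale_idem b0) => l1; first by rewrite El l1 scale0r.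
have : m *: a = (m * m) *: a.
  by rewrite -Em -Eab -{1}sq Eab Em gmulZl gmulZr aa scalerA.
case/(scale_idem a0) => m1.
  by move: b0; rewrite -[b]scale1r -l1 -El Eab Em m1 scale0r eqxx.
by move: ab; rewrite -[a]scale1r -m1 -Em -Eab El l1 scale1r eqxx.
Qed.

End Gen.

Section Main.
Variables (gT : finGroupType) (G N H : {group gT}).
Hypotheses (hsd : (N ><| H)%g = G) (abN : abelian N) (abH : abelian H).
Variable PN : seq (galg gT).
Hypothesis hPN : idem_eigenbasis N PN.
Variable v1 : galg gT.
Hypothesis hv1 : v1 \in PN.
Variable Ha : {set gT}.
Hypothesis hHa : Ha = [set h in H | gconj h v1 == v1].
Variable PHa : seq (galg gT).
Hypothesis hPHa : idem_eigenbasis Ha PHa.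
Variable u : galg gT.
Hypothesis hu : u \in PHa.
Variable hr : 'I_#|H : Ha|%g -> gT.
Hypothesis hrH : forall i, hr i \in H.
Hypothesis hrcos : injective (fun i => (Ha :* hr i)%g).

Local Notation c := #|H : Ha|%g.

Lemma nNH : H \subset 'N(N)%g. Proof. by case/sdprodP: hsd. Qed.
Lemma defG : (N * H)%g = G. Proof. by case/sdprodP: hsd. Qed.
Lemma tiNH : N :&: H = 1%g. Proof. by case/sdprodP: hsd. Qed.
Lemma sNG : N \subset G. Proof. by rewrite -defG mulG_subl. Qed.
Lemma sHG : H \subset G. Proof. by rewrite -defG mulG_subr. Qed.

Lemma memHa h : (h \in Ha) = (h \in H) && (gconj h v1 == v1).
Proof. by rewrite hHa inE. Qed.

Lemma sHaH : Ha \subset H.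
Proof. by apply/subsetP => x; rewrite memHa => /andP[]. Qed.

Lemma Ha_group : group_set Ha.
Proof.
apply/group_setP; split; first by rewrite memHa group1 gconj1 eqxx.
move=> x y; rewrite !memHa => /andP[xH /eqP ex] /andP[yH /eqP ey].
by rewrite groupM // gconjM ey ex eqxx.
Qed.

Definition HaG := Group Ha_group.

Lemma v1e : eig_idem N v1. Proof. exact: eigenbasis_eig hPN hv1. Qed.
Lemma ue : eig_idem Ha u. Proof. exact: eigenbasis_eig hPHa hu. Qed.

Lemma v1_fix s : s \in Ha -> gconj s v1 = v1.
Proof. by rewrite memHa => /andP[_ /eqP]. Qed.

Lemma deltaHa_v1 s : s \in Ha -> gmul (gdelta s) v1 = gmul v1 (gdelta s).
Proof. by move=> sHa; rewrite gdelta_conj v1_fix. Qed.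

Lemma u_v1 : gmul u v1 = gmul v1 u.
Proof. apply: (@comm_expand _ Ha); [by case: ue | exact: deltaHa_v1]. Qed.

Lemma u_delta h : h \in H -> gmul u (gdelta h) = gmul (gdelta h) u.
Proof.
move=> hH; apply: (@comm_expand _ Ha); first by case: ue.
move=> s sHa; rewrite !gdeltaM (ab_comm abH _ hH) //; exact: (subsetP sHaH).
Qed.

Fact w_key : unit. Proof. by []. Qed.
Definition w := locked_with w_key (gmul v1 u).
Lemma wE : w = gmul v1 u. Proof. by rewrite /w unlock. Qed.

Lemma ww : gmul w w = w.
Proof.
have [_ vv _ _] := v1e; have [_ uu _ _] := ue.
by rewrite wE gmulA -(gmulA u v1 u) u_v1 (gmulA v1 u u) uu -gmulA vv.
Qed.

Lemma conj_eig h : h \in H -> eig_idem N (gconj h v1).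
Proof.
move=> hH; have hN : h \in 'N(N)%g := subsetP nNH h hH.
case: v1e => [Nv vv v0 ev]; split.
- exact: gconj_in.
- by rewrite -gconj_mul vv.
- by apply: contra v0 => /eqP E; rewrite -(gconjK h v1) E gconj0.
move=> z Nz; have [l El] := ev _ (gconj_in (groupVr hN) Nz).
by exists l; rewrite -{1}(gconjVK h z) -gconj_mul El gconjZ.
Qed.

Lemma gdeltaMA (x y : gT) (r : galg gT) : gmul (gdelta x) (gmul (gdelta y) r) = gmul (gdelta (x * y)%g) r.
Proof. by rewrite -gmulA gdeltaM. Qed.

Lemma wdw h : h \in H -> h \notin Ha -> gmul (gmul w (gdelta h)) w = 0.
Proof.
move=> hH hHa'; have [_ _ uu _] := ue.
have -> : gmul (gmul w (gdelta h)) w = gmul (gmul v1 (gmul (gdelta h) v1)) (gmul u u).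
  rewrite wE !gmulA -(gmulA u (gdelta h)) u_delta // !gmulA.
  by rewrite -(gmulA u v1) u_v1 !gmulA.
rewrite gdelta_conj -(gmulA v1) (eig_orth abN v1e (conj_eig hH)) ?gmul0l //.
by apply: contra hHa' => /eqP E; rewrite memHa hH -E eqxx.
Qed.


Definition a (i : 'I_c) := gdelta (hr i).
Definition ab (i : 'I_c) := gdelta (hr i)^-1%g.
Definition E' (i j : 'I_c) := gmul (gmul (a i) w) (ab j).

Lemma hr_notin (j k : 'I_c) : j != k -> ((hr j)^-1 * hr k)%g \notin Ha.
Proof.
apply: contra => hjk; apply/eqP; apply: hrcos => /=.
have : hr k \in (HaG :* hr j)%g.
  apply/rcosetP; exists ((hr j)^-1 * hr k)%g => //.
  by rewrite (ab_comm abH _ (hrH j)) ?mulKVg // (subsetP sHaH).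
by move/rcoset_eqP => E; rewrite -[Ha]/(HaG : {set gT}) E.
Qed.

Lemma E'mul i j k l : gmul (E' i j) (E' k l) = if j == k then E' i l else 0.
Proof.
rewrite /E' /a /ab !gmulA gdeltaMA.
case: eqP => [->|/eqP jk].
  by rewrite mulVg gmul1l -(gmulA w w) ww.
have -> : forall x y, gmul w (gmul (gdelta x) (gmul w y)) = gmul (gmul (gmul w (gdelta x)) w) y.
  by move=> x y; rewrite !gmulA.
by rewrite wdw ?gmul0l ?gmul0r ?hr_notin // groupM ?groupV.
Qed.

Lemma wi i : gmul (gconj (hr i) v1) u = E' i i.
Proof.
by rewrite /gconj /E' wE /a /ab !gmulA u_delta ?groupV.
Qed.

Lemma e_E' i j : gmul (gmul (gmul (gconj (hr i) v1) u) (gdelta (hr i * (hr j)^-1)%g))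
   (gmul (gconj (hr j) v1) u) = E' i j.
Proof.
rewrite !wi /E' /a /ab !gmulA !gdeltaMA.
have -> : ((hr i)^-1 * (hr i * (hr j)^-1) * hr j = 1)%g by rewrite mulKg mulVg.
by rewrite gmul1l -(gmulA w w) ww.
Qed.

Lemma coset_cover h : h \in H -> exists k : 'I_c, h \in (Ha :* hr k)%g.
Proof.
move=> hH.
have cosE : [set (Ha :* hr i)%g | i : 'I_c] = rcosets Ha H.
  apply/eqP; rewrite eqEcard (card_imset _ hrcos) card_ord leqnn andbT.
  apply/subsetP => X /imsetP[i _ ->]; by rewrite -[Ha]/(HaG : {set gT}) mem_rcosets mulSGid ?hrH // sHaH.
have : (Ha :* h)%g \in rcosets Ha H by rewrite -[Ha]/(HaG : {set gT}) mem_rcosets mulSGid ?sHaH.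
rewrite -cosE => /imsetP[k _ Ek]; exists k; rewrite -Ek.
exact: (rcoset_refl HaG h).
Qed.

Lemma delta_E' g i : g \in G -> exists (k : 'I_c) (m : algC),
  gmul (gdelta g) (E' i i) = m *: E' k i.
Proof.
rewrite -defG => /mulsgP[n h nN hH ->].
have [k hk] := coset_cover (groupM hH (hrH i)).
case/rcosetP: hk => s sHa Eh.
have sH : s \in H := subsetP sHaH s sHa.
have [Hu _ _ eu] := ue; have [Nv _ _ ev] := v1e.
have [mu Emu] := eu (gdelta s) (in_galg_delta sHa).
have n'N : (n ^ hr k)%g \in N by rewrite memJ_norm // (subsetP nNH) // hrH.
have Eg : (n * h * hr i = hr k * ((n ^ hr k) * s))%g.
  by rewrite -mulgA Eh (ab_comm abH sH (hrH k)) /conjg !mulgA mulgV mul1g.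
move: (n ^ hr k)%g n'N Eg => n' n'N Eg.
have [la Ela] := ev (gdelta n') (in_galg_delta n'N).
exists k, (la * mu).
rewrite -gdeltaM /E' wE /a /ab !gmulA !gdeltaMA Eg -!gdeltaMA.
rewrite -(gmulA (gdelta s) v1) deltaHa_v1 // (gmulA v1) -(gmulA (gdelta s) u) Emu.
rewrite gmulZl !gmulZr -(gmulA (gdelta n')) Ela gmulZl !gmulZr scalerA.
by rewrite mulrC.
Qed.


Definition EM (M : 'M[algC]_c) : galg gT := \sum_(i < c) \sum_(j < c) M i j *: E' i j.

Lemma EM_delta i j : EM (delta_mx i j) = E' i j.
Proof.
rewrite /EM (bigD1 i) //= [X in _ + X]big1 ?addr0; last first.
  by move=> i' /negbTE ni; apply: big1 => j' _; rewrite mxE ni scale0r.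
rewrite (bigD1 j) //= big1 ?addr0; last by move=> j' /negbTE nj; rewrite mxE nj andbF scale0r.
by rewrite mxE !eqxx scale1r.
Qed.

Lemma EM_lin k M M' : EM (k *: M + M') = k *: EM M + EM M'.
Proof.
rewrite /EM scaler_sumr -big_split; apply: eq_bigr => i _.
rewrite scaler_sumr -big_split; apply: eq_bigr => j _.
by rewrite !mxE scalerDl scalerA.
Qed.

Lemma EM0 : EM 0 = 0.
Proof. by rewrite /EM big1 // => i _; rewrite big1 // => j _; rewrite mxE scale0r. Qed.

Lemma E'_EM i j M : gmul (E' i j) (EM M) = \sum_(l < c) M j l *: E' i l.
Proof.
rewrite /EM gmul_sumr (bigD1 j) //= [X in _ + X]big1 ?addr0; last first.
  by move=> k /negbTE nk; rewrite gmul_sumr big1 // => l _; rewrite gmulZr E'mul eq_sym nk scaler0.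
by rewrite gmul_sumr; apply: eq_bigr => l _; rewrite gmulZr E'mul eqxx.
Qed.

Lemma EM_mul M M' : gmul (EM M) (EM M') = EM (M *m M').
Proof.
rewrite {1}/EM gmul_suml /EM; apply: eq_bigr => i _.
rewrite gmul_suml.
under eq_bigr => j _ do rewrite gmulZl E'_EM scaler_sumr.
rewrite exchange_big /=; apply: eq_bigr => l _.
by rewrite mxE scaler_suml; apply: eq_bigr => j _; rewrite scalerA.
Qed.

Lemma EM_corner i j M : gmul (gmul (E' i i) (EM M)) (E' j j) = M i j *: E' i j.
Proof.
rewrite E'_EM gmul_suml (bigD1 j) //= [X in _ + X]big1 ?addr0; last first.
  by move=> l /negbTE nl; rewrite gmulZl E'mul nl scaler0.
by rewrite gmulZl E'mul eqxx.
Qed.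

Lemma w_neq0 : w != 0.
Proof.
have [Nv _ v0 _] := v1e; have [Hu _ u0 _] := ue.
have [n vn] := galg_neq0 v0; have [s us] := galg_neq0 u0.
case nN: (n \in N); last by rewrite Nv ?nN ?eqxx in vn.
case sHa: (s \in Ha); last by rewrite Hu ?sHa ?eqxx in us.
apply/negP => /eqP w0.
have : w (n * s)%g = 0 by rewrite w0 ffunE.
rewrite wE gmulE (bigD1 n) //= big1 ?addr0; last first.
  move=> x /negbTE xn.
case xN: (x \in N); last by rewrite Nv ?xN ?mul0r.
rewrite Hu ?mulr0 //; apply/negP => Hx.
have : (x^-1 * n)%g \in N :&: H.
  rewrite inE groupM ?groupV //=.
  have -> : (x^-1 * n = (x^-1 * (n * s)) * s^-1)%g by rewrite mulgA mulgK.
  by rewrite groupM ?groupV // (subsetP sHaH).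
rewrite tiNH inE -eq_mulVg1 => /eqP xn'.
by rewrite xn' eqxx in xn.
by rewrite mulKg => /eqP; rewrite mulf_eq0 (negbTE vn) (negbTE us).
Qed.

Lemma E'_neq0 i j : E' i j != 0.
Proof.
apply/negP => /eqP E0.
have Eii : E' i i = 0 by have := E'mul i j j i; rewrite eqxx E0 gmul0l => <-.
move/negP: w_neq0; apply; apply/eqP.
have <- : gmul (gmul (ab i) (E' i i)) (a i) = w.
  by rewrite /E' /a /ab !gmulA gdeltaVK gdeltaM mulVg gmul1r.
by rewrite Eii gmul0r gmul0l.
Qed.

Definition coef i j (x : galg gT) : algC :=
  if [pick g | E' i j g != 0] is Some g
  then gmul (gmul (E' i i) x) (E' j j) g / E' i j g else 0.

Definition phi (x : galg gT) : 'M[algC]_c := \matrix_(i, j) coef i j x.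

Lemma phi_EM M : phi (EM M) = M.
Proof.
apply/matrixP => i j; rewrite mxE /coef EM_corner; case: pickP => [g gnz | H0].
  by rewrite ffunE scaleCE mulfK.
exfalso; move/negP: (E'_neq0 i j); apply; apply/eqP/ffunP => g.
by move: (H0 g) => /= /negbFE /eqP ->; rewrite ffunE.
Qed.


Definition J' := \sum_(i < c) E' i i.

Lemma J_EM : J' = EM 1%:M.
Proof.
rewrite /J' /EM; apply: eq_bigr => i _.
rewrite (bigD1 i) //= big1 ?addr0; first by rewrite mxE eqxx mulr1n scale1r.
by move=> j nj; rewrite mxE eq_sym (negbTE nj) mulr0n scale0r.
Qed.

Definition Span (x : galg gT) := exists M, x = EM M.

Lemma Span0 : Span 0. Proof. by exists 0; rewrite EM0. Qed.
Lemma SpanD x y : Span x -> Span y -> Span (x + y).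
Proof. by move=> [M ->] [M' ->]; exists (1 *: M + M'); rewrite EM_lin scale1r. Qed.
Lemma SpanZ k x : Span x -> Span (k *: x).
Proof. by move=> [M ->]; exists (k *: M + 0); rewrite EM_lin EM0 addr0. Qed.

Lemma A_span y : in_galg G y -> Span (gmul y J').
Proof.
move=> Gy; rewrite (galg_expand Gy) gmul_suml.
apply: (big_ind Span); [exact: Span0 | exact: SpanD | move=> g gG].
rewrite gmulZl; apply: SpanZ; rewrite /J' gmul_sumr.
apply: (big_ind Span); [exact: Span0 | exact: SpanD | move=> i _].
have [k [m ->]] := delta_E' i gG.
by apply: SpanZ; exists (delta_mx k i); rewrite EM_delta.
Qed.

Lemma E'_G i j : in_galg G (E' i j).
Proof.
have [Nv _ _ _] := v1e; have [Hu _ _ _] := ue.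
rewrite /E' /a /ab wE; apply: in_galg_mul; last first.
  by apply: in_galg_delta; rewrite groupV (subsetP sHG) ?hrH.
apply: in_galg_mul; first by apply: in_galg_delta; rewrite (subsetP sHG) ?hrH.
apply: in_galg_mul; first exact: (in_galgS sNG).
by apply: (in_galgS _ Hu); apply: subset_trans sHaH sHG.
Qed.

Lemma EM_G M : in_galg G (EM M).
Proof.
apply: in_galg_sum => i _; apply: in_galg_sum => j _; apply: in_galgZ; exact: E'_G.
Qed.

Lemma EM_J M : EM M = gmul (EM M) J'.
Proof. by rewrite J_EM EM_mul mulmx1. Qed.

Lemma core :
  let c := #|H : Ha|%g in
  let v := fun i : 'I_c => gconj (hr i) v1 in
  let w := fun i : 'I_c => gmul (v i) u in
  let e := fun i j : 'I_c =>
     gmul (gmul (w i) (gdelta (hr i * (hr j)^-1)%g)) (w j) in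
  let J := \sum_(i < c) w i in
  let A := fun x : galg gT => exists y, in_galg G y /\ x = gmul y J in
  [/\ forall i j k : 'I_c, gmul (e i j) (e j k) = e i k,
      forall i j k l : 'I_c, j != k -> gmul (e i j) (e k l) = 0
    & exists phi : galg gT -> 'M[algC]_c,
      [/\ forall i j, A (e i j),
          forall (a : algC) x y, A x -> A y -> phi (a *: x + y) = a *: phi x + phi y,
          forall x y, A x -> A y -> phi (gmul x y) = phi x *m phi y,
          (forall x y, A x -> A y -> phi x = phi y -> x = y) /\
          (forall M, exists x, A x /\ phi x = M)
        & forall i j, phi (e i j) = delta_mx i j]].
Proof.
move=> c0 v0 w0 e0 J0 A0.
have eE : forall i j, e0 i j = E' i j by move=> i j; rewrite /e0 /w0 /v0 e_E'.
have JE : J0 = J' by rewrite /J0 /J'; apply: eq_bigr => i _; rewrite /w0 /v0 wi.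
have AE : forall x, A0 x <-> Span x.
  move=> x; split; first by move=> [y [Gy ->]]; rewrite JE; apply: A_span.
  by move=> [M ->]; exists (EM M); split; [exact: EM_G | rewrite JE -EM_J].
split.
- by move=> i j k; rewrite !eE E'mul eqxx.
- by move=> i j k l jk; rewrite !eE E'mul (negbTE jk).
exists phi; split.
- by move=> i j; apply/AE; exists (delta_mx i j); rewrite eE EM_delta.
- by move=> k x y /AE[M ->] /AE[M' ->]; rewrite -EM_lin !phi_EM.
- by move=> x y /AE[M ->] /AE[M' ->]; rewrite EM_mul !phi_EM.
- split; first by move=> x y /AE[M ->] /AE[M' ->]; rewrite !phi_EM => ->.
  by move=> M; exists (EM M); split; [apply/AE; exists M | exact: phi_EM].
by move=> i j; rewrite eE -EM_delta phi_EM.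
Qed.

End Main.

Unset Implicit Arguments. Set Strict Implicit.

Theorem mainTheorem11 (gT : finGroupType) (G N H : {group gT})
  (hsd : (N ><| H)%g = G) (abN : abelian N) (abH : abelian H)
  (PN : seq (galg gT)) (hPN : idem_eigenbasis N PN)
  (v1 : galg gT) (hv1 : v1 \in PN)
  (Ha : {set gT}) (hHa : Ha = [set h in H | gconj h v1 == v1])
  (PHa : seq (galg gT)) (hPHa : idem_eigenbasis Ha PHa)
  (u : galg gT) (hu : u \in PHa)
  (hr : 'I_#|H : Ha|%g -> gT)
  (hrH : forall i, hr i \in H)
  (hrcos : injective (fun i => (Ha :* hr i)%g)) :
  let c := #|H : Ha|%g in
  let v := fun i : 'I_c => gconj (hr i) v1 in
  let w := fun i : 'I_c => gmul (v i) u in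
  let e := fun i j : 'I_c =>
     gmul (gmul (w i) (gdelta (hr i * (hr j)^-1)%g)) (w j) in
  let J := \sum_(i < c) w i in
  let A := fun x : galg gT => exists y, in_galg G y /\ x = gmul y J in
  [/\ forall i j k : 'I_c, gmul (e i j) (e j k) = e i k,
      forall i j k l : 'I_c, j != k -> gmul (e i j) (e k l) = 0
    & exists phi : galg gT -> 'M[algC]_c,
      [/\ forall i j, A (e i j),
          forall (a : algC) x y, A x -> A y -> phi (a *: x + y) = a *: phi x + phi y,
          forall x y, A x -> A y -> phi (gmul x y) = phi x *m phi y,
          (forall x y, A x -> A y -> phi x = phi y -> x = y) /\
          (forall M, exists x, A x /\ phi x = M)
        & forall i j, phi (e i j) = delta_mx i j]].
Proof. exact: (core hsd abN abH hPN hv1 hHa hPHa hu hrH hrcos). Qed.
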